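(* Let $R$ be an integral domain with a language $\mathcal{L}$ which is the language of rings $\{0,1,+,\cdot\}$ possibly with extra constants and relations, and suppose Hilbert's tenth problem over $(R,\mathcal{L})$ has a positive answer. Let $K$ be the fraction field of $R$, $\overline K$ its algebraic closure, and let $\alpha\in\overline K$ be integral over $R$ with minimal equation having coefficients in $R_0=S_c'(\mathcal{L})$. Let $\mathcal{L}_\alpha=\mathcal{L}\cup\{c_\alpha,\mathrm{In}R\}$ with $c_\alpha$ a constant and $\mathrm{In}R$ a unary relation, interpreted on $R[\alpha]$ by: $+,\cdot$ the usual operations; each constant $c$ of $\mathcal{L}$ as in $R$; each relation $S$ of $\mathcal{L}$ as the same set as in $R$; $c_\alpha$ as $\alpha$; and $\mathrm{In}R(x)$ iff $x\in R$. Then Hilbert's tenth problem over $(R[\alpha],\mathcal{L}_\alpha)$ has a positive answer.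
   Context: For a set $R$ with language $\mathcal{L}$ (constants, functions, relations incl. $0$ and $=$), a basic formula has the form $(t_1,\dots,t_m)\in S$ with $S$ a relation of $\mathcal{L}$ or equality and $t_j$ terms built from constants and variables via the functions; $S\subset R^k$ is Diophantine if $S=\{\vec x\mid\exists\vec y\ (f_1\wedge\dots\wedge f_r)\}$ for basic formulas $f_i$. $S_c'(\mathcal{L})=\{x\in R\mid\{x\}\text{ is Diophantine}\}$. Hilbert's tenth problem has a positive answer over $(R,\mathcal{L})$ if there is an algorithm that decides, for any finite conjunction of basic formulas with coefficients from $S_c'(\mathcal{L})$ (given via a recursive ring of such coefficients), whether it has a solution in $R$. *)

(* Defs.v *)
From HB Require Import structures.
From mathcomp Require Import all_boot all_algebra.
From Stdlib Require List.
Set Implicit Arguments. Unset Strict Implicit. Unset Printing Implicit Defensive.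
Import GRing.Theory.

Inductive recf : Type :=
| RZero
| RSucc
| RProj (i : nat)             (* i-th projection (0 if out of range) *)
| RComp (f : recf) (gs : seq recf)
| RPrec (f g : recf)
| RMin (f : recf).

Inductive evalr : recf -> seq nat -> nat -> Prop :=
| ev_Z xs : evalr RZero xs 0
| ev_S x xs : evalr RSucc (x :: xs) x.+1
| ev_P i xs : evalr (RProj i) xs (nth 0 xs i)
| ev_C f gs xs ys y :
    List.Forall2 (fun g y => evalr g xs y) gs ys -> evalr f ys y ->
    evalr (RComp f gs) xs y
| ev_R0 f g xs y : evalr f xs y -> evalr (RPrec f g) (0 :: xs) y
| ev_RS f g n xs r y :
    evalr (RPrec f g) (n :: xs) r -> evalr g (n :: r :: xs) y ->
    evalr (RPrec f g) (n.+1 :: xs) y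
| ev_M f xs n :
    evalr f (n :: xs) 0 ->
    (forall m, m < n -> exists k, evalr f (m :: xs) k.+1) ->
    evalr (RMin f) xs n.

(* Syntax: the language of rings {0,1,+,*} plus extra constant symbols *)
(* (indexed by nat) and extra relation symbols (indexed by nat).       *)
Inductive term : Type :=
| TVar (n : nat)
| TZero
| TOne
| TCst (i : nat)
| TAdd (s t : term)
| TMul (s t : term).

Inductive basic : Type :=
| BEq (s t : term)
| BRel (i : nat) (ts : seq term).

(* a finite conjunction of basic formulas (all variables existentially
   quantified when asking for solvability) *)
Definition conj_formula := seq basic.

(* Goedel coding of formulas into nat (Cantor pairing). *)
Definition npair (a b : nat) : nat := (a + b) * (a + b).+1 %/ 2 + b.

Fixpoint enc_term (t : term) : nat :=
  match t with
  | TVar n => npair 0 n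
  | TZero => npair 1 0
  | TOne => npair 2 0
  | TCst i => npair 3 i
  | TAdd s u => npair 4 (npair (enc_term s) (enc_term u))
  | TMul s u => npair 5 (npair (enc_term s) (enc_term u))
  end.

Fixpoint enc_terms (ts : seq term) : nat :=
  match ts with
  | [::] => 0
  | t :: ts' => (npair (enc_term t) (enc_terms ts')).+1
  end.

Definition enc_basic (b : basic) : nat :=
  match b with
  | BEq s t => npair 0 (npair (enc_term s) (enc_term t))
  | BRel i ts => npair 1 (npair i (enc_terms ts))
  end.

Fixpoint enc_conj (phi : conj_formula) : nat :=
  match phi with
  | [::] => 0
  | b :: phi' => (npair (enc_basic b) (enc_conj phi')).+1
  end.

(* Semantics: a structure for this language, with a domain predicate   *)
(* (so that a subring of an ambient type can be used as carrier).      *)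
Record Struc := {
  car : Type;
  sdom : car -> Prop;
  szero : car;
  sone : car;
  sadd : car -> car -> car;
  smul : car -> car -> car;
  scst : nat -> car;
  srel : nat -> seq car -> Prop
}.

Fixpoint teval (S : Struc) (v : nat -> car S) (t : term) : car S :=
  match t with
  | TVar n => v n
  | TZero => @szero S
  | TOne => @sone S
  | TCst i => @scst S i
  | TAdd s u => sadd (teval v s) (teval v u)
  | TMul s u => smul (teval v s) (teval v u)
  end.

Definition bholds (S : Struc) (v : nat -> car S) (b : basic) : Prop :=
  match b with
  | BEq s t => teval v s = teval v t
  | BRel i ts => @srel S i (map (teval v) ts)
  end.

Definition holds (S : Struc) (v : nat -> car S) (phi : conj_formula) : Prop :=
  forall b, List.In b phi -> bholds v b.

Definition solvable (S : Struc) (phi : conj_formula) : Prop :=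
  exists v : nat -> car S, (forall n, @sdom S (v n)) /\ holds v phi.

(* S'_c(L): elements x such that {x} is Diophantine (variable 0 is the
   free variable x, all other variables are existentially quantified). *)
Definition diophantine_singleton (S : Struc) (x : car S) : Prop :=
  exists phi : conj_formula,
    forall z, @sdom S z ->
      ((exists v : nat -> car S,
          (forall n, @sdom S (v n)) /\ v 0%N = z /\ holds v phi) <-> z = x).

Definition H10_positive (S : Struc) : Prop :=
  exists f : recf, forall phi : conj_formula,
    (solvable S phi -> evalr f [:: enc_conj phi] 1) /\
    (~ solvable S phi -> evalr f [:: enc_conj phi] 0).

Local Open Scope ring_scope.

Definition StrucR (R : idomainType) (cst : nat -> R) (rel : nat -> seq R -> Prop)
  : Struc :=
  {| car := R; sdom := fun _ => True; szero := 0%R; sone := 1%R;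
     sadd := +%R; smul := *%R; scst := cst; srel := rel |}.

(* R[alpha] inside an ambient field F containing R via iota *)
Definition inRalpha (R : idomainType) (F : fieldType) (iota : {rmorphism R -> F})
  (alpha : F) (x : F) : Prop :=
  exists q : {poly R}, x = (map_poly iota q).[alpha].

(* L_alpha = L u {c_alpha, InR}: extra constant 0 is c_alpha, extra constant
   n+1 is the constant n of L; extra relation 0 is InR, extra relation n+1 is
   the relation n of L (interpreted as the same subset as in R). *)
Definition alpha_cst (R : idomainType) (F : fieldType) (iota : {rmorphism R -> F})
  (alpha : F) (cst : nat -> R) (i : nat) : F :=
  match i with 0 => alpha | n.+1 => iota (cst n) end.

Definition alpha_rel (R : idomainType) (F : fieldType) (iota : {rmorphism R -> F})
  (rel : nat -> seq R -> Prop) (i : nat) (s : seq F) : Prop :=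
  match i with
  | 0 => exists r : R, s = [:: iota r]
  | n.+1 => exists s0 : seq R, rel n s0 /\ s = map iota s0
  end.

Definition StrucRalpha (R : idomainType) (F : fieldType) (iota : {rmorphism R -> F})
  (alpha : F) (cst : nat -> R) (rel : nat -> seq R -> Prop) : Struc :=
  {| car := F; sdom := inRalpha iota alpha; szero := 0%R; sone := 1%R;
     sadd := +%R; smul := *%R; scst := alpha_cst iota alpha cst;
     srel := alpha_rel iota rel |}.

(* Main.v *)
Require Import Defs.
From mathcomp Require Import all_boot all_algebra.
Import GRing.Theory.
From mathcomp Require Import zify.
From Stdlib Require List.
From Stdlib Require Import ClassicalEpsilon.

Module H19.
Set Implicit Arguments. Unset Strict Implicit. Unset Printing Implicit Defensive.

Definition Rep (k : nat) (F : seq nat -> nat) :=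
  exists r, forall xs, size xs = k -> evalr r xs (F xs).

Lemma Rep_ext k F G : (forall xs, size xs = k -> F xs = G xs) -> Rep k F -> Rep k G.
Proof. move=> e [r hr]; exists r => xs hs; rewrite -e //; exact: hr. Qed.

Fixpoint rconst c := match c with 0 => RZero | c'.+1 => RComp RSucc [:: rconst c'] end.

Lemma ev_const c xs : evalr (rconst c) xs c.
Proof.
elim: c => [|c IH] /=; first exact: ev_Z.
apply: (@ev_C _ _ _ [:: c]); first by constructor.
exact: ev_S.
Qed.

Lemma Rep_const k c : Rep k (fun _ => c).
Proof. by exists (rconst c) => xs _; apply: ev_const. Qed.

Lemma Rep_proj k i : Rep k (fun xs => nth 0 xs i).
Proof. by exists (RProj i) => xs _; apply: ev_P. Qed.

Lemma Rep_succ k A : Rep k A -> Rep k (fun xs => (A xs).+1).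
Proof.
move=> [r hr]; exists (RComp RSucc [:: r]) => xs hs.
apply: (@ev_C _ _ _ [:: A xs]); first by constructor; [exact: hr|constructor].
exact: ev_S.
Qed.

Lemma Rep_list k (Hs : seq (seq nat -> nat)) :
  (forall H, List.In H Hs -> Rep k H) ->
  exists rs, forall xs, size xs = k ->
    List.Forall2 (fun g y => evalr g xs y) rs (map (fun H => H xs) Hs).
Proof.
elim: Hs => [|H Hs IH] hH; first by exists [::] => xs _; constructor.
have [r hr] := hH H (or_introl erefl).
have [rs hrs] := IH (fun H' h => hH H' (or_intror h)).
exists (r :: rs) => xs hs; constructor; [exact: hr | exact: hrs].
Qed.

Lemma Rep_comp k m G (Hs : seq (seq nat -> nat)) :
  size Hs = m -> Rep m G -> (forall H, List.In H Hs -> Rep k H) ->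
  Rep k (fun xs => G (map (fun H => H xs) Hs)).
Proof.
move=> sH [g hg] hH; have [rs hrs] := Rep_list hH.
exists (RComp g rs) => xs hs; apply: ev_C; first exact: hrs.
by apply: hg; rewrite size_map.
Qed.

Fixpoint precF (G : seq nat -> nat) (H : seq nat -> nat) (n : nat) (ys : seq nat) :=
  match n with 0 => G ys | m.+1 => H (m :: precF G H m ys :: ys) end.

Lemma Rep_prec k G H : Rep k G -> Rep k.+2 H ->
  Rep k.+1 (fun xs => precF G H (nth 0 xs 0) (behead xs)).
Proof.
move=> [g hg] [h hh]; exists (RComp (RPrec g h) (map RProj (iota 0 k.+1))).
move=> xs hs; apply: (@ev_C _ _ _ xs).
  have {2}-> : xs = map (fun i => nth 0 xs i) (iota 0 k.+1).
    apply: (@eq_from_nth _ 0); first by rewrite size_map size_iota.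
    by move=> i hi; rewrite (nth_map 0) ?size_iota -?hs // nth_iota // -hs.
  elim: (iota 0 k.+1) => [|a l IH] /=; constructor; [exact: ev_P | exact: IH].
case: xs hs => [|n ys] //= [hs].
elim: n => [|n IH] /=; first by apply: ev_R0; apply: hg.
apply: ev_RS; first exact: IH.
by apply: hh => /=; rewrite hs.
Qed.

Definition R1 (f : nat -> nat) := Rep 1 (fun xs => f (nth 0 xs 0)).
Definition R2 (f : nat -> nat -> nat) := Rep 2 (fun xs => f (nth 0 xs 0) (nth 0 xs 1)).
Definition R3 (f : nat -> nat -> nat -> nat) :=
  Rep 3 (fun xs => f (nth 0 xs 0) (nth 0 xs 1) (nth 0 xs 2)).

Lemma Rep_c1 k f A : R1 f -> Rep k A -> Rep k (fun xs => f (A xs)).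
Proof.
move=> hf hA.
have := @Rep_comp k 1 _ [:: A] erefl hf.
apply => H [<-|[]] //.
Qed.

Lemma Rep_c2 k f A B : R2 f -> Rep k A -> Rep k B -> Rep k (fun xs => f (A xs) (B xs)).
Proof.
move=> hf hA hB.
have := @Rep_comp k 2 _ [:: A; B] erefl hf.
apply => H [<-|[<-|[]]] //.
Qed.

Lemma Rep_c3 k f A B C : R3 f -> Rep k A -> Rep k B -> Rep k C ->
  Rep k (fun xs => f (A xs) (B xs) (C xs)).
Proof.
move=> hf hA hB hC.
have := @Rep_comp k 3 _ [:: A; B; C] erefl hf.
apply => H [<-|[<-|[<-|[]]]] //.
Qed.

Lemma R2_prec (f : nat -> nat -> nat) g h :
  R1 g -> R3 h -> (forall y, f 0 y = g y) -> (forall m y, f m.+1 y = h m (f m y) y) -> R2 f.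
Proof.
move=> hg hh e0 eS.
have := @Rep_prec 1 (fun ys => g (nth 0 ys 0))
   (fun ys => h (nth 0 ys 0) (nth 0 ys 1) (nth 0 ys 2)) hg hh.
apply: Rep_ext => xs hs.
case: xs hs => [|n [|y [|]]] //= _.
elim: n => [|n IH] /=; first by rewrite e0.
by rewrite IH eS.
Qed.

Lemma R1_prec (f : nat -> nat) c h :
  R2 h -> f 0 = c -> (forall m, f m.+1 = h m (f m)) -> R1 f.
Proof.
move=> hh e0 eS.
have := @Rep_prec 0 (fun _ => c) (fun ys => h (nth 0 ys 0) (nth 0 ys 1)) (Rep_const _ _) hh.
apply: Rep_ext => xs hs.
case: xs hs => [|n []] //= _.
elim: n => [|n IH] /=; first by rewrite e0.
by rewrite IH eS.
Qed.

Lemma Rep_nth k i : Rep k (fun xs => nth 0 xs i). Proof. exact: Rep_proj. Qed.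

Lemma R1_id : R1 id. Proof. exact: Rep_proj. Qed.

Lemma R2_add : R2 addn.
Proof.
apply: (@R2_prec _ id (fun m r y => r.+1)) => //; first exact: R1_id.
  exact: Rep_succ (Rep_nth _ 1).
Qed.

Lemma R1_pred : R1 predn.
Proof. by apply: (@R1_prec _ 0 (fun m r => m)) => //; apply: Rep_nth. Qed.

Lemma R2_sub : R2 subn.
Proof.
have h : R2 (fun y x => x - y).
  apply: (@R2_prec _ id (fun m r y => r.-1)); first exact: R1_id.
    exact: Rep_c1 R1_pred (Rep_nth _ 1).
  by move=> y; rewrite subn0.
  by move=> m y; rewrite subnS.
exact: Rep_c2 h (Rep_nth _ 1) (Rep_nth _ 0).
Qed.

Lemma R2_mul : R2 muln.
Proof.
apply: (@R2_prec _ (fun _ => 0) (fun m r y => r + y)) => //.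
  exact: Rep_const.
  exact: Rep_c2 R2_add (Rep_nth _ 1) (Rep_nth _ 2).
by move=> m y; rewrite mulSn addnC.
Qed.

Lemma R3_ifz : R3 (fun x a b => if x == 0 then a else b).
Proof.
have := @Rep_prec 2 (fun ys => nth 0 ys 0) (fun ys => nth 0 ys 3) (Rep_nth _ _) (Rep_nth _ _).
apply: Rep_ext => xs hs.
case: xs hs => [|x [|a [|b []]]] //= _.
by case: x.
Qed.

Lemma Rep_if k (B : seq nat -> bool) X Y :
  Rep k (fun xs => nat_of_bool (B xs)) -> Rep k X -> Rep k Y ->
  Rep k (fun xs => if B xs then X xs else Y xs).
Proof.
move=> hB hX hY; have := Rep_c3 R3_ifz hB hY hX.
by apply: Rep_ext => xs _; case: (B xs).
Qed.

Lemma R2_eqb : R2 (fun a b => nat_of_bool (a == b)).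
Proof.
have := Rep_c3 R3_ifz (Rep_c2 R2_add (Rep_c2 R2_sub (Rep_nth 2 0) (Rep_nth 2 1))
                                   (Rep_c2 R2_sub (Rep_nth 2 1) (Rep_nth 2 0)))
               (Rep_const 2 1) (Rep_const 2 0).
apply: Rep_ext => xs _; set a := nth 0 xs 0; set b := nth 0 xs 1.
case: (a =P b) => [->|ne]; first by rewrite subnn.
by case: eqP => //; lia.
Qed.

Lemma R2_leb : R2 (fun a b => nat_of_bool (a <= b)).
Proof.
have := Rep_c3 R3_ifz (Rep_c2 R2_sub (Rep_nth 2 0) (Rep_nth 2 1))
               (Rep_const 2 1) (Rep_const 2 0).
apply: Rep_ext => xs _; by rewrite subn_eq0; case: leqP.
Qed.

Lemma Rep_eqb k A B : Rep k A -> Rep k B -> Rep k (fun xs => nat_of_bool (A xs == B xs)).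
Proof. exact: Rep_c2 R2_eqb. Qed.
Lemma Rep_leb k A B : Rep k A -> Rep k B -> Rep k (fun xs => nat_of_bool (A xs <= B xs)).
Proof. exact: Rep_c2 R2_leb. Qed.
Lemma Rep_add k A B : Rep k A -> Rep k B -> Rep k (fun xs => A xs + B xs).
Proof. exact: Rep_c2 R2_add. Qed.
Lemma Rep_sub k A B : Rep k A -> Rep k B -> Rep k (fun xs => A xs - B xs).
Proof. exact: Rep_c2 R2_sub. Qed.
Lemma Rep_mul k A B : Rep k A -> Rep k B -> Rep k (fun xs => A xs * B xs).
Proof. exact: Rep_c2 R2_mul. Qed.
Lemma Rep_pred k A : Rep k A -> Rep k (fun xs => (A xs).-1).
Proof. exact: Rep_c1 R1_pred. Qed.

Fixpoint triN m := match m with 0 => 0 | m'.+1 => triN m' + m'.+1 end.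

Lemma triN2 m : triN m * 2 = m * m.+1.
Proof. elim: m => [|m IH] //=; rewrite mulnDl IH; lia. Qed.

Lemma npairE a b : npair a b = triN (a + b) + b.
Proof. by rewrite /npair -triN2 mulnK. Qed.

Lemma triN_mono m m' : m <= m' -> triN m <= triN m'.
Proof.
move=> h; rewrite -(subnK h); elim: (m' - m) => [|d IH] //=.
by apply: leq_trans IH _; exact: leq_addr.
Qed.

Lemma triN_ge m : m <= triN m.
Proof. elim: m => [|m IH] //=; lia. Qed.

Lemma R1_tri : R1 triN.
Proof.
apply: (@R1_prec _ 0 (fun m r => r + m.+1)) => //.
exact: Rep_add (Rep_nth _ 1) (Rep_succ (Rep_nth _ 0)).
Qed.

Lemma R2_npair : R2 npair.
Proof.
have := Rep_add (Rep_c1 R1_tri (Rep_add (Rep_nth 2 0) (Rep_nth 2 1))) (Rep_nth 2 1).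
by apply: Rep_ext => xs _; rewrite npairE.
Qed.

Fixpoint dgF m c := match m with 0 => 0 | m'.+1 => dgF m' c + (triN m'.+1 <= c) end.
Definition dg c := dgF c c.
Definition usnd c := c - triN (dg c).
Definition ufst c := dg c - usnd c.

Lemma dgF_min m c s : triN s <= c < triN s.+1 -> dgF m c = minn m s.
Proof.
move=> /andP [h1 h2]; elim: m => [|m IH] /=; first by rewrite min0n.
rewrite IH; case: (ltnP m s) => hms.
  have : triN m.+1 <= c by apply: leq_trans h1; apply: triN_mono.
  by move=> ->; lia.
have : ~~ (triN m.+1 <= c).
  by rewrite -ltnNge; apply: leq_trans h2 _; apply: triN_mono.
by move/negbTE => ->; lia.
Qed.

Lemma dg_spec c s : triN s <= c < triN s.+1 -> dg c = s.
Proof.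
move=> h; rewrite /dg (dgF_min _ h).
have : s <= c by case/andP: h => h1 _; apply: leq_trans (triN_ge _) h1.
lia.
Qed.

Lemma dg_ex c : exists s, triN s <= c < triN s.+1.
Proof.
elim: c => [|c [s /andP [h1 h2]]]; first by exists 0.
case: (ltnP c.+1 (triN s.+1)) => h3.
  by exists s; rewrite h3 andbT; lia.
exists s.+1; apply/andP; split; first by lia.
by rewrite /=; move: h2 => /=; lia.
Qed.

Lemma unpair_npair a b : ufst (npair a b) = a /\ usnd (npair a b) = b.
Proof.
have h : dg (npair a b) = a + b.
  by apply: dg_spec; rewrite npairE /=; lia.
rewrite /ufst /usnd h npairE; lia.
Qed.
Lemma ufstE a b : ufst (npair a b) = a. Proof. by case: (unpair_npair a b). Qed.
Lemma usndE a b : usnd (npair a b) = b. Proof. by case: (unpair_npair a b). Qed.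

Lemma npair_unpair c : npair (ufst c) (usnd c) = c.
Proof.
have [s hs] := dg_ex c; rewrite /ufst /usnd (dg_spec hs) npairE.
move: hs => /andP [h1 h2]; rewrite /= in h2.
have -> : (s - (c - triN s) + (c - triN s)) = s by lia.
lia.
Qed.

Lemma npair_ge a b : (a <= npair a b) && (b <= npair a b).
Proof. rewrite npairE; have := triN_ge (a + b); lia. Qed.

Lemma npair_gt a b : 0 < a -> b < npair a b.
Proof. rewrite npairE => ha; have := triN_ge (a + b); lia. Qed.

Lemma ufst_le c : ufst c <= c.
Proof. by rewrite -{2}(npair_unpair c); case/andP: (npair_ge (ufst c) (usnd c)). Qed.
Lemma usnd_le c : usnd c <= c.
Proof. by rewrite -{2}(npair_unpair c); case/andP: (npair_ge (ufst c) (usnd c)). Qed.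

Lemma R1_dg : R1 dg.
Proof.
have h : R2 dgF.
  apply: (@R2_prec _ (fun _ => 0) (fun m r c => r + (triN m.+1 <= c))) => //.
    exact: Rep_const.
  exact: Rep_add (Rep_nth _ 1) (Rep_leb (Rep_c1 R1_tri (Rep_succ (Rep_nth _ 0))) (Rep_nth _ 2)).
exact: Rep_c2 h (Rep_nth _ 0) (Rep_nth _ 0).
Qed.

Lemma R1_usnd : R1 usnd.
Proof. exact: Rep_sub (Rep_nth _ 0) (Rep_c1 R1_tri (Rep_c1 R1_dg (Rep_nth _ 0))). Qed.
Lemma R1_ufst : R1 ufst.
Proof. exact: Rep_sub (Rep_c1 R1_dg (Rep_nth _ 0)) (Rep_c1 R1_usnd (Rep_nth _ 0)). Qed.

Lemma Rep_npair k A B : Rep k A -> Rep k B -> Rep k (fun xs => npair (A xs) (B xs)).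
Proof. exact: Rep_c2 R2_npair. Qed.
Lemma Rep_ufst k A : Rep k A -> Rep k (fun xs => ufst (A xs)).
Proof. exact: Rep_c1 R1_ufst. Qed.
Lemma Rep_usnd k A : Rep k A -> Rep k (fun xs => usnd (A xs)).
Proof. exact: Rep_c1 R1_usnd. Qed.

Definition ncs x L := (npair x L).+1.
Definition nhead L := ufst L.-1.
Definition ntail L := usnd L.-1.
Definition encl (l : seq nat) := foldr ncs 0 l.

Fixpoint declF f L := match f with 0 => [::] | f'.+1 =>
  match L with 0 => [::] | L'.+1 => ufst L' :: declF f' (usnd L') end end.
Definition decl L := declF L L.

Lemma declF_eq f f' L : L <= f -> L <= f' -> declF f L = declF f' L.
Proof.
elim: f f' L => [|f IH] [|f'] [|L] //= h1 h2.
congr (_ :: _); apply: IH; apply: leq_trans (usnd_le _) _; lia.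
Qed.

Lemma declE L : decl L = if L is L'.+1 then ufst L' :: decl (usnd L') else [::].
Proof.
case: L => [|L] //=; congr (_ :: _); apply: declF_eq => //; have := usnd_le L; lia.
Qed.

Lemma encl_decl L : encl (decl L) = L.
Proof.
elim: L {-2}L (leqnn L) => [|N IH] [|L] // h.
rewrite declE /= /ncs IH ?npair_unpair //; have := usnd_le L; lia.
Qed.

Lemma decl_encl l : decl (encl l) = l.
Proof. elim: l => [|x l IH] //; by rewrite declE /= /ncs ufstE usndE IH. Qed.

Lemma size_decl L : size (decl L) <= L.
Proof.
elim: L {-2}L (leqnn L) => [|N IH] [|L] // h.
rewrite declE /=; have := usnd_le L; have := IH (usnd L); lia.
Qed.

Lemma ntail_encl s : ntail (encl s) = encl (behead s).
Proof.
case: s => [|x s] /=; last by rewrite /ntail /ncs /= usndE.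
by rewrite /ntail /=; exact: (usndE 0 0).
Qed.

Lemma nhead_encl x s : nhead (encl (x :: s)) = x.
Proof. by rewrite /nhead /= /ncs /= ufstE. Qed.

Lemma encl0 s : (encl s == 0) = (s == [::]). Proof. by case: s. Qed.

Lemma dropS (T : Type) (l : seq T) i : drop i.+1 l = behead (drop i l).
Proof. elim: l i => [|x l IH] [|i] //=; by rewrite drop0. Qed.

Definition itail i L := iter i ntail L.

Lemma itailE i L : itail i L = encl (drop i (decl L)).
Proof.
elim: i => [|i IH]; first by rewrite /itail /= drop0 encl_decl.
by rewrite /itail iterS -/(itail i L) IH ntail_encl dropS.
Qed.

Lemma R2_itail : R2 itail.
Proof.
apply: (@R2_prec _ id (fun m r y => ntail r)) => //; first exact: R1_id.
exact: Rep_usnd (Rep_pred (Rep_nth _ 1)).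
Qed.

Lemma Rep_itail k A B : Rep k A -> Rep k B -> Rep k (fun xs => itail (A xs) (B xs)).
Proof. exact: Rep_c2 R2_itail. Qed.
Lemma Rep_nhead k A : Rep k A -> Rep k (fun xs => nhead (A xs)).
Proof. by move=> h; apply: Rep_ufst; apply: Rep_pred. Qed.
Lemma Rep_ntail k A : Rep k A -> Rep k (fun xs => ntail (A xs)).
Proof. by move=> h; apply: Rep_usnd; apply: Rep_pred. Qed.
Lemma Rep_ncons k A B : Rep k A -> Rep k B -> Rep k (fun xs => ncs (A xs) (B xs)).
Proof. by move=> hA hB; apply: Rep_succ; apply: Rep_npair. Qed.

Section Fold.
Variable h : nat -> nat -> nat.
Fixpoint loopF m Lv Av := match m with 0 => Av | m'.+1 =>
  let T := itail (Lv - m'.+1) Lv in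
  if T == 0 then loopF m' Lv Av else h (nhead T) (loopF m' Lv Av) end.

Lemma loopF_spec m Lv Av : m <= Lv ->
  loopF m Lv Av = foldr h Av (drop (Lv - m) (decl Lv)).
Proof.
elim: m => [|m IH] hm /=; first by rewrite subn0 drop_oversize // size_decl.
rewrite IH; last by lia.
rewrite itailE encl0.
have e : Lv - m = (Lv - m.+1).+1 by lia.
rewrite e dropS.
by case: (drop _ _) => [|x s] //=; rewrite nhead_encl.
Qed.

Lemma loop_fold Lv Av : loopF Lv Lv Av = foldr h Av (decl Lv).
Proof. by rewrite loopF_spec // subnn drop0. Qed.

Lemma Rep_fold k L A : R2 h -> Rep k L -> Rep k A ->
  Rep k (fun xs => foldr h (A xs) (decl (L xs))).
Proof.
move=> hh hL hA.
have hl : R3 loopF.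
  have hH : Rep 4 (fun ys =>
      if itail (nth 0 ys 2 - (nth 0 ys 0).+1) (nth 0 ys 2) == 0 then nth 0 ys 1
      else h (nhead (itail (nth 0 ys 2 - (nth 0 ys 0).+1) (nth 0 ys 2))) (nth 0 ys 1)).
    have hT : Rep 4 (fun ys => itail (nth 0 ys 2 - (nth 0 ys 0).+1) (nth 0 ys 2)).
      exact: Rep_itail (Rep_sub (Rep_nth _ 2) (Rep_succ (Rep_nth _ 0))) (Rep_nth _ 2).
    apply: Rep_if; first exact: Rep_eqb hT (Rep_const _ 0).
      exact: Rep_nth.
    exact: Rep_c2 hh (Rep_nhead hT) (Rep_nth _ 1).
  have := @Rep_prec 2 (fun ys => nth 0 ys 1) _ (Rep_nth _ _) hH.
  apply: Rep_ext => xs hs.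
  case: xs hs => [|m [|Lv [|Av []]]] //= _.
  by elim: m => [|m IH] //=; rewrite IH.
have := Rep_c3 hl hL hL hA.
by apply: Rep_ext => xs _; rewrite loop_fold.
Qed.
End Fold.

Definition RepT k (T : seq nat -> term) := Rep k (fun xs => enc_term (T xs)).
Definition RepB k (B : seq nat -> basic) := Rep k (fun xs => enc_basic (B xs)).
Definition RepCat k (BS : seq nat -> seq basic) :=
  forall A, Rep k A -> Rep k (fun xs => foldr ncs (A xs) (map enc_basic (BS xs))).

Lemma RepT_const k t : RepT k (fun _ => t).
Proof. exact: Rep_const. Qed.
Lemma RepT_var k A : Rep k A -> RepT k (fun xs => TVar (A xs)).
Proof. by move=> h; apply: Rep_npair (Rep_const _ _) h. Qed.
Lemma RepT_cst k A : Rep k A -> RepT k (fun xs => TCst (A xs)).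
Proof. by move=> h; apply: Rep_npair (Rep_const _ _) h. Qed.
Lemma RepT_add k S U : RepT k S -> RepT k U -> RepT k (fun xs => TAdd (S xs) (U xs)).
Proof. by move=> h1 h2; apply: Rep_npair (Rep_const _ _) (Rep_npair h1 h2). Qed.
Lemma RepT_mul k S U : RepT k S -> RepT k U -> RepT k (fun xs => TMul (S xs) (U xs)).
Proof. by move=> h1 h2; apply: Rep_npair (Rep_const _ _) (Rep_npair h1 h2). Qed.

Lemma RepT_foldr k (I : Type) (l : seq I) (F : I -> seq nat -> term -> term) T0 :
  (forall a T, RepT k T -> RepT k (fun xs => F a xs (T xs))) -> RepT k T0 ->
  RepT k (fun xs => foldr (fun a acc => F a xs acc) (T0 xs) l).
Proof. by move=> hF h0; elim: l => [|a l IH] //=; apply: hF. Qed.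

Lemma RepB_eq k S U : RepT k S -> RepT k U -> RepB k (fun xs => BEq (S xs) (U xs)).
Proof. by move=> h1 h2; apply: Rep_npair (Rep_const _ _) (Rep_npair h1 h2). Qed.

Fixpoint enc_terms' (ts : seq term) := match ts with [::] => 0 | t :: ts' => ncs (enc_term t) (enc_terms' ts') end.
Lemma enc_termsE ts : enc_terms ts = encl (map enc_term ts).
Proof. by elim: ts => [|t ts IH] //=; rewrite IH. Qed.

Lemma RepB_rel k I TS : Rep k I -> Rep k (fun xs => encl (map enc_term (TS xs))) ->
  RepB k (fun xs => BRel (I xs) (TS xs)).
Proof.
move=> h1 h2; have := Rep_npair (Rep_const k 1) (Rep_npair h1 h2).
by apply: Rep_ext => xs _ /=; rewrite enc_termsE.
Qed.

Lemma RepCat_nil k : RepCat k (fun _ => [::]).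
Proof. by move=> A hA. Qed.
Lemma RepCat_cons k B BS : RepB k B -> RepCat k BS -> RepCat k (fun xs => B xs :: BS xs).
Proof. by move=> hB hBS A hA /=; apply: Rep_ncons hB (hBS A hA). Qed.
Lemma RepCat_cat k B1 B2 : RepCat k B1 -> RepCat k B2 -> RepCat k (fun xs => B1 xs ++ B2 xs).
Proof.
move=> h1 h2 A hA; have := h1 _ (h2 A hA).
by apply: Rep_ext => xs _; rewrite map_cat foldr_cat.
Qed.
Lemma RepCat_map k (l : seq nat) (B : nat -> seq nat -> basic) :
  (forall j, RepB k (B j)) -> RepCat k (fun xs => [seq B j xs | j <- l]).
Proof.
move=> hB; elim: l => [|j l IH]; first exact: RepCat_nil.
exact: RepCat_cons (hB j) IH.
Qed.
Lemma RepCat_if k (C : seq nat -> bool) B1 B2 :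
  Rep k (fun xs => nat_of_bool (C xs)) -> RepCat k B1 -> RepCat k B2 ->
  RepCat k (fun xs => if C xs then B1 xs else B2 xs).
Proof.
move=> hC h1 h2 A hA; have := Rep_if hC (h1 A hA) (h2 A hA).
by apply: Rep_ext => xs _; case: (C xs).
Qed.
Lemma RepCat_ext k B1 B2 : (forall xs, size xs = k -> B1 xs = B2 xs) -> RepCat k B1 -> RepCat k B2.
Proof. by move=> e h A hA; apply: Rep_ext (h A hA) => xs hs; rewrite e. Qed.

Lemma RepCat_flat k (f : nat -> seq basic) L :
  RepCat 2 (fun ys => f (nth 0 ys 0)) -> Rep k L ->
  RepCat k (fun xs => flatten (map f (decl (L xs)))).
Proof.
move=> hf hL A hA.
have := Rep_fold (h := fun x acc => foldr ncs acc (map enc_basic (f x))) (hf _ (Rep_nth _ 1)) hL hA.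
apply: Rep_ext => xs _; elim: (decl (L xs)) => [|x l IH] //=.
by rewrite map_cat foldr_cat IH.
Qed.

Lemma Rep_encl_map k (g : nat -> term) L :
  Rep 1 (fun ys => enc_term (g (nth 0 ys 0))) -> Rep k L ->
  Rep k (fun xs => encl (map enc_term (map g (decl (L xs))))).
Proof.
move=> hg hL.
have hh : R2 (fun x acc => ncs (enc_term (g x)) acc).
  apply: Rep_ncons (Rep_nth _ 1).
  have := @Rep_comp 2 1 _ [:: fun ys => nth 0 ys 0] erefl hg.
  by apply; [move=> H [<-|[]]; apply: Rep_nth].
have := Rep_fold hh hL (Rep_const k 0).
by apply: Rep_ext => xs _; elim: (decl (L xs)) => [|x l IH] //=; rewrite IH.
Qed.

Section Trans.
Variable n : nat.
Variable Dc : nat.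

Definition V e j := 2 * (e * n + j).
Definition Pv i := (2 * npair i 0).+1.

Fixpoint Ct m j := match m with
  | 0 => if j == 0 then TOne else TZero
  | m'.+1 => TAdd (if j is j'.+1 then Ct m' j' else TZero) (TMul (Ct m' n.-1) (TVar (Pv j)))
  end.

Definition mulT s u j :=
  foldr (fun a acc => foldr (fun b acc' =>
     TAdd (TMul (TMul (TVar (V s a)) (TVar (V u b))) (Ct (a + b) j)) acc') acc (iota 0 n))
   TZero (iota 0 n).

Definition eqs_blk e (f : nat -> term) := [seq BEq (TVar (V e j)) (f j) | j <- iota 0 n].

Definition blockL e :=
  let tag := ufst e in let r := usnd e in let s := ufst r in let u := usnd r in
  if tag == 1 then eqs_blk e (fun _ => TZero)
  else if tag == 2 then eqs_blk e (fun j => Ct 0 j)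
  else if tag == 3 then
    (if r == 0 then eqs_blk e (fun j => Ct 1 j)
     else eqs_blk e (fun j => if j == 0 then TCst r.-1 else TZero))
  else if tag == 4 then eqs_blk e (fun j => TAdd (TVar (V s j)) (TVar (V u j)))
  else if tag == 5 then eqs_blk e (fun j => mulT s u j)
  else [::].

Definition zeros t := [seq BEq (TVar (V t j)) TZero | j <- iota 1 n.-1].

Definition atomL x :=
  let tag := ufst x in let r := usnd x in
  if tag == 0 then [seq BEq (TVar (V (ufst r) j)) (TVar (V (usnd r) j)) | j <- iota 0 n]
  else if tag == 1 then
    let i := ufst r in let L := usnd r in
    if i == 0 then
      (if L == 0 then [:: BEq TOne TZero]
       else if ntail L == 0 then zeros (nhead L) else [:: BEq TOne TZero])
    else BRel i.-1 (map (fun t => TVar (V t 0)) (decl L)) :: flatten (map zeros (decl L))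
  else [::].

Fixpoint BN c := match c with 0 => Dc | e.+1 => foldr ncs (BN e) (map enc_basic (blockL e)) end.

Definition TN c := foldr (fun x acc => foldr ncs acc (map enc_basic (atomL x))) (BN c) (decl c).

Lemma Rep_V k A B : Rep k A -> Rep k B -> Rep k (fun xs => V (A xs) (B xs)).
Proof.
move=> hA hB; exact: Rep_mul (Rep_const _ 2) (Rep_add (Rep_mul hA (Rep_const _ n)) hB).
Qed.

Lemma RepCat_eqs k E (f : nat -> seq nat -> term) :
  Rep k E -> (forall j, RepT k (f j)) -> RepCat k (fun xs => eqs_blk (E xs) (fun j => f j xs)).
Proof.
move=> hE hf; apply: RepCat_map => j; apply: RepB_eq (hf j).
exact: RepT_var (Rep_V hE (Rep_const _ _)).
Qed.

Lemma RepCat_block k e : Rep k e -> RepCat k (fun ys => blockL (e ys)).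
Proof.
move=> he.
have ht := Rep_ufst he.
have hr := Rep_usnd he.
have hs := Rep_ufst hr.
have hu := Rep_usnd hr.
rewrite /blockL.
apply: RepCat_if; first exact: Rep_eqb ht (Rep_const _ _).
  by apply: (@RepCat_eqs k e (fun _ _ => TZero)) => // j; apply: RepT_const.
apply: RepCat_if; first exact: Rep_eqb ht (Rep_const _ _).
  by apply: (@RepCat_eqs k e (fun j _ => Ct 0 j)) => // j; apply: RepT_const.
apply: RepCat_if; first exact: Rep_eqb ht (Rep_const _ _).
  apply: RepCat_if; first exact: Rep_eqb hr (Rep_const _ _).
    by apply: (@RepCat_eqs k e (fun j _ => Ct 1 j)) => // j; apply: RepT_const.
  apply: (@RepCat_eqs k e (fun j ys => if j == 0 then TCst (usnd (e ys)).-1 else TZero)) => // j.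
  case: j => [|j] /=; last exact: RepT_const.
  exact: RepT_cst (Rep_pred hr).
apply: RepCat_if; first exact: Rep_eqb ht (Rep_const _ _).
  apply: (@RepCat_eqs k e (fun j ys => TAdd (TVar (V (ufst (usnd (e ys))) j)) (TVar (V (usnd (usnd (e ys))) j)))) => // j.
  by apply: RepT_add; apply: RepT_var; apply: Rep_V => //; apply: Rep_const.
apply: RepCat_if; first exact: Rep_eqb ht (Rep_const _ _).
  apply: (@RepCat_eqs k e (fun j ys => mulT (ufst (usnd (e ys))) (usnd (usnd (e ys))) j)) => // j.
  rewrite /mulT; apply: RepT_foldr; last exact: RepT_const.
  move=> a T hT; apply: RepT_foldr => // b T' hT'.
  apply: RepT_add => //; apply: RepT_mul; last exact: RepT_const.
  by apply: RepT_mul; apply: RepT_var; apply: Rep_V => //; apply: Rep_const.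
exact: RepCat_nil.
Qed.

Lemma RepCat_zeros k E : Rep k E -> RepCat k (fun xs => zeros (E xs)).
Proof.
move=> hE; apply: RepCat_map => j; apply: RepB_eq; last exact: RepT_const.
exact: RepT_var (Rep_V hE (Rep_const _ _)).
Qed.

Lemma RepCat_false k : RepCat k (fun _ => [:: BEq TOne TZero]).
Proof. by move=> A hA; apply: Rep_ncons (Rep_const _ _) hA. Qed.

Lemma RepCat_atom k x : Rep k x -> RepCat k (fun ys => atomL (x ys)).
Proof.
move=> hx.
have ht := Rep_ufst hx.
have hr := Rep_usnd hx.
have hi := Rep_ufst hr.
have hL := Rep_usnd hr.
rewrite /atomL.
apply: RepCat_if; first exact: Rep_eqb ht (Rep_const _ _).
  by apply: RepCat_map => j; apply: RepB_eq; apply: RepT_var; apply: Rep_V;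
   [exact: hi | exact: Rep_const | exact: hL | exact: Rep_const].
apply: RepCat_if; first exact: Rep_eqb ht (Rep_const _ _); last exact: RepCat_nil.
apply: RepCat_if; first exact: Rep_eqb hi (Rep_const _ _).
  apply: RepCat_if; first exact: Rep_eqb hL (Rep_const _ _).
    by apply: RepCat_false.
  apply: RepCat_if; first exact: Rep_eqb (Rep_ntail hL) (Rep_const _ _).
    exact: RepCat_zeros (Rep_nhead hL).
  by apply: RepCat_false.
apply: RepCat_cons.
  apply: RepB_rel; first exact: Rep_pred hi.
  apply: Rep_encl_map hL.
  exact: RepT_var (Rep_V (Rep_nth _ 0) (Rep_const _ _)).
apply: RepCat_flat hL.
have := RepCat_zeros (Rep_nth 2 0).
by [].
Qed.

Lemma Rep_TN : Rep 1 (fun xs => TN (nth 0 xs 0)).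
Proof.
have hB : R1 BN.
  apply: (@R1_prec _ Dc (fun m r => foldr ncs r (map enc_basic (blockL m)))) => //.
  exact: (RepCat_block (Rep_nth 2 0)) _ (Rep_nth _ 1).
rewrite /TN.
apply: (Rep_fold (h := fun x acc => foldr ncs acc (map enc_basic (atomL x)))).
- exact: (RepCat_atom (Rep_nth 2 0)) _ (Rep_nth _ 1).
- exact: Rep_nth.
- exact: hB.
Qed.
End Trans.

Fixpoint renT (f : nat -> nat) t := match t with
  | TVar m => TVar (f m) | TZero => TZero | TOne => TOne | TCst i => TCst i
  | TAdd s u => TAdd (renT f s) (renT f u) | TMul s u => TMul (renT f s) (renT f u) end.
Definition renB f b := match b with
  | BEq s t => BEq (renT f s) (renT f t) | BRel i ts => BRel i (map (renT f) ts) end.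

Definition ren i m := (2 * npair i m.+1).+1.

Section Psi.
Variable n : nat.
Variable phiD : nat -> conj_formula.

Definition defsI i := BEq (TAdd (TVar (Pv i)) (TVar (ren i 0))) TZero :: map (renB (ren i)) (phiD i).
Definition defsL := flatten [seq defsI i | i <- iota 0 n].

Fixpoint blocksS c := match c with 0 => defsL | e.+1 => blockL n e ++ blocksS e end.

Definition psi (phi : conj_formula) :=
  flatten [seq atomL n (enc_basic b) | b <- phi] ++ blocksS (enc_conj phi).

Lemma enc_conjE phi : enc_conj phi = encl (map enc_basic phi).
Proof. by elim: phi => [|b phi IH] //=; rewrite IH. Qed.

Lemma foldr_ncs l acc : foldr ncs (enc_conj acc) (map enc_basic l) = enc_conj (l ++ acc).
Proof. by elim: l => [|b l IH] //=; rewrite IH. Qed.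

Lemma BN_blocks c : BN n (enc_conj defsL) c = enc_conj (blocksS c).
Proof. by elim: c => [|c IH] //=; rewrite IH foldr_ncs. Qed.

Lemma TN_psi phi : TN n (enc_conj defsL) (enc_conj phi) = enc_conj (psi phi).
Proof.
rewrite /TN BN_blocks /psi.
have -> : decl (enc_conj phi) = map enc_basic phi by rewrite enc_conjE decl_encl.
move: (blocksS _) => B.
elim: phi => [|b phi IH] //=.
by rewrite IH foldr_ncs catA.
Qed.
End Psi.

Lemma In_cat (T : Type) (x : T) s1 s2 : List.In x (s1 ++ s2) <-> List.In x s1 \/ List.In x s2.
Proof. elim: s1 => [|y s1 IH] /=; [tauto | rewrite IH; tauto]. Qed.

Lemma In_map (T U : Type) (f : T -> U) y s : List.In y (map f s) <-> exists x, List.In x s /\ y = f x.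
Proof.
elim: s => [|x s IH] /=; first by split => // [[x []]].
rewrite IH; split.
  by case=> [<-|[z [hz ->]]]; [exists x; auto | exists z; auto].
by case=> z [[<-|hz] ->]; [left | right; exists z].
Qed.

Lemma In_flatten (T : Type) (x : T) ss : List.In x (flatten ss) <-> exists s, List.In s ss /\ List.In x s.
Proof.
elim: ss => [|s ss IH] /=; first by split => // [[s []]].
rewrite In_cat IH; split.
  by case=> [h|[s' [h1 h2]]]; [exists s; auto | exists s'; auto].
by case=> s' [[<-|h1] h2]; [left | right; exists s'].
Qed.

Lemma In_mem (T : eqType) (x : T) s : List.In x s <-> x \in s.
Proof.
elim: s => [|y s IH] //=; rewrite in_cons IH; split.
  by case=> [->|->]; rewrite ?eqxx ?orbT.
by case/orP => [/eqP ->|]; auto.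
Qed.

Lemma In_iota j a k : List.In j (iota a k) <-> (a <= j < a + k).
Proof. by rewrite In_mem mem_iota. Qed.

Fixpoint decT f e := match f with 0 => TZero | f'.+1 =>
  match ufst e with
  | 0 => TVar (usnd e) | 1 => TZero | 2 => TOne | 3 => TCst (usnd e)
  | 4 => TAdd (decT f' (ufst (usnd e))) (decT f' (usnd (usnd e)))
  | 5 => TMul (decT f' (ufst (usnd e))) (decT f' (usnd (usnd e)))
  | _ => TZero end end.
Definition dec e := decT e.+1 e.

Lemma usnd_lt e : ufst e != 0 -> usnd e < e.
Proof. by move=> h; rewrite -{2}(npair_unpair e); apply: npair_gt; rewrite lt0n. Qed.

Lemma decT_eq f f' e : e < f -> e < f' -> decT f e = decT f' e.
Proof.
elim: f f' e => [|f IH] [|f'] e //= h1 h2.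
have hl : ufst e != 0 -> usnd e < e by apply: usnd_lt.
have := ufst_le (usnd e); have := usnd_le (usnd e) => a b.
case E: (ufst e) => [|[|[|[|[|[|t]]]]]] //=; rewrite E in hl;
  have := hl isT => {}hl; f_equal; apply: IH; lia.
Qed.

Lemma decE e : dec e =
  match ufst e with
  | 0 => TVar (usnd e) | 1 => TZero | 2 => TOne | 3 => TCst (usnd e)
  | 4 => TAdd (dec (ufst (usnd e))) (dec (usnd (usnd e)))
  | 5 => TMul (dec (ufst (usnd e))) (dec (usnd (usnd e)))
  | _ => TZero end.
Proof.
rewrite {1}/dec.
have -> : decT e.+1 e = match ufst e with
  | 0 => TVar (usnd e) | 1 => TZero | 2 => TOne | 3 => TCst (usnd e)
  | 4 => TAdd (decT e (ufst (usnd e))) (decT e (usnd (usnd e)))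
  | 5 => TMul (decT e (ufst (usnd e))) (decT e (usnd (usnd e)))
  | _ => TZero end by [].
have hl : ufst e != 0 -> usnd e < e by apply: usnd_lt.
have := ufst_le (usnd e); have := usnd_le (usnd e) => a b.
case E: (ufst e) => [|[|[|[|[|[|t]]]]]] //; rewrite E in hl;
  have := hl isT => {}hl; f_equal; apply: decT_eq; lia.
Qed.

Lemma dec_enc t : dec (enc_term t) = t.
Proof.
elim: t => [k| | |i|s IHs u IHu|s IHs u IHu]; rewrite decE.
- by rewrite -[enc_term _]/(npair 0 k) ufstE usndE.
- by rewrite -[enc_term _]/(npair 1 0) ufstE.
- by rewrite -[enc_term _]/(npair 2 0) ufstE.
- by rewrite -[enc_term _]/(npair 3 i) ufstE usndE.
- by rewrite -[enc_term _]/(npair 4 (npair (enc_term s) (enc_term u))) ufstE !usndE ufstE IHs IHu.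
- by rewrite -[enc_term _]/(npair 5 (npair (enc_term s) (enc_term u))) ufstE !usndE ufstE IHs IHu.
Qed.

Lemma enc_sub_lt tag s u : 0 < tag -> (s < npair tag (npair s u)) && (u < npair tag (npair s u)).
Proof.
move=> h; have := npair_gt (npair s u) h; case/andP: (npair_ge s u) => h1 h2 h3.
apply/andP; split; lia.
Qed.

Lemma encl_lt x l : List.In x l -> x < encl l.
Proof.
elim: l => [|y l IH] //= [<-|h]; rewrite /ncs;
  case/andP: (npair_ge y (encl l)) => h1 h2.
  lia.
have := IH h; lia.
Qed.

Module SemM.

Lemma teval_ren (S : Struc) (w : nat -> car S) f t : teval w (renT f t) = teval (fun m => w (f m)) t.
Proof. by elim: t => //= [s IHs u IHu|s IHs u IHu]; rewrite IHs IHu. Qed.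

Lemma teval_ext (S : Struc) (w1 w2 : nat -> car S) t : (forall m, w1 m = w2 m) -> teval w1 t = teval w2 t.
Proof. by move=> h; elim: t => //= [s IHs u IHu|s IHs u IHu]; rewrite ?h ?IHs ?IHu. Qed.

Lemma bholds_ren (S : Struc) (w : nat -> car S) f b : bholds w (renB f b) <-> bholds (fun m => w (f m)) b.
Proof.
case: b => [s t|i ts] /=; first by rewrite !teval_ren.
by rewrite -map_comp; rewrite (eq_map (fun t => teval_ren w f t)).
Qed.

Lemma bholds_ext (S : Struc) (w1 w2 : nat -> car S) b : (forall m, w1 m = w2 m) -> bholds w1 b <-> bholds w2 b.
Proof.
move=> h; case: b => [s t|i ts] /=; first by rewrite !(teval_ext _ h).
by rewrite (eq_map (fun t => teval_ext t h)).
Qed.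

Lemma eq_map_In (T U : Type) (f g : T -> U) s : (forall x, List.In x s -> f x = g x) -> map f s = map g s.
Proof. elim: s => [|x s IH] //= h; rewrite h ?IH //; [move=> y hy; apply: h|]; auto. Qed.

Lemma sum_iota (R : nmodType) k (G : nat -> R) : (\sum_(a <- iota 0 k) G a = \sum_(a < k) G a)%R.
Proof. by rewrite -(big_mkord xpredT) /index_iota subn0. Qed.

Local Open Scope ring_scope.
Section Alg.
Variables (R : idomainType) (F : fieldType) (io : {rmorphism R -> F}).
Hypothesis iota_inj : injective io.
Variables (alpha : F) (p : {poly R}) (n' : nat).
Hypothesis sp : size p = n'.+2.
Hypothesis p_monic : p \is monic.
Hypothesis p_root : root (map_poly io p) alpha.
Hypothesis p_min : forall q : {poly R}, q != 0 -> root (map_poly io q) alpha ->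
             (size p <= size q)%N.

Local Notation nn := n'.+1.
Definition qc j := - p`_j.
Definition rsum (c : nat -> R) : F := \sum_(j < nn) io (c j) * alpha ^+ j.

Fixpoint Cv m j := match m with
  | 0 => if j == 0%N then 1 else 0
  | m'.+1 => (if j is j'.+1 then Cv m' j' else 0) + Cv m' n' * qc j
  end.

Lemma rsum_eq c d : (forall j, (j < nn)%N -> c j = d j) -> rsum c = rsum d.
Proof. by move=> h; apply: eq_bigr => j _; rewrite h. Qed.

Lemma rsumD c d : rsum c + rsum d = rsum (fun j => c j + d j).
Proof. by rewrite /rsum -big_split; apply: eq_bigr => j _; rewrite rmorphD mulrDl. Qed.

Lemma rsum0 : rsum (fun _ => 0) = 0.
Proof. by rewrite /rsum big1 // => j _; rewrite rmorph0 mul0r. Qed.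

Lemma rsum_const r : rsum (fun j => if j == 0%N then r else 0) = io r.
Proof.
rewrite /rsum big_ord_recl /= expr0 mulr1 big1 ?addr0 // => j _.
by rewrite rmorph0 mul0r.
Qed.

Lemma rsumZ r c : io r * rsum c = rsum (fun j => r * c j).
Proof. by rewrite /rsum mulr_sumr; apply: eq_bigr => j _; rewrite rmorphM mulrA. Qed.

Lemma alpha_n : alpha ^+ nn = rsum qc.
Proof.
move: p_root; rewrite /root (horner_coef_wide _ (n := nn.+1)); last first.
  by rewrite size_map_inj_poly ?rmorph0 // sp.
rewrite big_ord_recr /= coef_map_id0 ?rmorph0 //.
have -> : p`_nn = 1 by move/monicP: p_monic; rewrite /lead_coef sp.
rewrite rmorph1 mul1r addrC addr_eq0 => /eqP ->.
rewrite /rsum -sumrN; apply: eq_bigr => j _.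
by rewrite coef_map_id0 ?rmorph0 // /qc rmorphN mulNr.
Qed.

Lemma alpha_pow m : alpha ^+ m = rsum (Cv m).
Proof.
elim: m => [|m IH].
  by rewrite expr0 rsum_const rmorph1.
rewrite exprSr IH /rsum mulr_suml big_ord_recr /=.
under eq_bigr do rewrite -mulrA -exprSr.
rewrite -/(rsum _) (eq_bigr (fun j : 'I_nn => io ((if (j : nat) is j'.+1 then Cv m j' else 0) * 1 + Cv m n' * qc j) * alpha ^+ j)); last first.
  by move=> j _; rewrite mulr1.
rewrite -/(rsum (fun j => (if j is j'.+1 then Cv m j' else 0) * 1 + Cv m n' * qc j)).
rewrite -rsumD -rsumZ -alpha_n -mulrA -exprSr.
rewrite /rsum big_ord_recl /= mul0r rmorph0 mul0r add0r.
by congr (_ + _); apply: eq_bigr => j _; rewrite mulr1.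
Qed.

Lemma rsum_uniq c d : rsum c = rsum d -> forall j, (j < nn)%N -> c j = d j.
Proof.
move=> e j hj; set P := \poly_(j < nn) (c j - d j).
have hP : root (map_poly io P) alpha.
  rewrite /root (horner_coef_wide _ (n := nn)); last first.
    by rewrite size_map_inj_poly ?rmorph0 // size_poly.
  apply/eqP; transitivity (rsum c - rsum d); last by rewrite e subrr.
  rewrite /rsum -sumrB; apply: eq_bigr => i _.
  by rewrite coef_map_id0 ?rmorph0 // coef_poly ltn_ord rmorphB mulrBl.
case: (P =P 0) => [P0|/eqP Pn0].
  have := congr1 (fun P : {poly R} => P`_j) P0.
  by rewrite coef_poly hj coef0 => /eqP; rewrite subr_eq0 => /eqP.
have := p_min Pn0 hP; rewrite sp; have := size_poly nn (fun j => c j - d j).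
rewrite -/P; lia.
Qed.

Definition mulc (c d : nat -> R) j := \sum_(a < nn) \sum_(b < nn) c a * d b * Cv (a + b) j.

Lemma rsum_sum (I : Type) (r : seq I) (c : I -> nat -> R) :
  \sum_(m <- r) rsum (c m) = rsum (fun j => \sum_(m <- r) c m j).
Proof.
rewrite /rsum exchange_big; apply: eq_bigr => j _.
by rewrite rmorph_sum mulr_suml.
Qed.

Lemma rsum_mul c d : rsum c * rsum d = rsum (mulc c d).
Proof.
rewrite {1 2}/rsum big_distrlr /=.
transitivity (\sum_(a < nn) \sum_(b < nn) rsum (fun j => c a * d b * Cv (a + b) j)).
  apply: eq_bigr => a _; apply: eq_bigr => b _.
  by rewrite mulrACA -exprD alpha_pow -rmorphM rsumZ.
rewrite /mulc; under eq_bigr do rewrite rsum_sum.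
by rewrite rsum_sum.
Qed.

Lemma inR_rsum x : inRalpha io alpha x <-> exists c, x = rsum c.
Proof.
split.
  move=> [Q ->]; rewrite (horner_coef_wide _ (n := size Q)); last first.
    by rewrite size_map_inj_poly ?rmorph0.
  exists (fun j => \sum_(m < size Q) Q`_m * Cv m j).
  rewrite -rsum_sum; apply: eq_bigr => m _.
  by rewrite coef_map_id0 ?rmorph0 // alpha_pow rsumZ.
move=> [c ->]; exists (\poly_(j < nn) c j).
rewrite (horner_coef_wide _ (n := nn)); last by rewrite size_map_inj_poly ?rmorph0 // size_poly.
by apply: eq_bigr => j _; rewrite coef_map_id0 ?rmorph0 // coef_poly ltn_ord.
Qed.

Variables (cst : nat -> R) (rel : nat -> seq R -> Prop).
Local Notation SR := (StrucR cst rel).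
Local Notation SA := (StrucRalpha io alpha cst rel).

Lemma Ct_eval (w : nat -> R) : (forall i, (i < nn)%N -> w (Pv i) = qc i) ->
  forall m j, (j < nn)%N -> teval (S := SR) w (Ct nn m j) = Cv m j.
Proof.
move=> hP; elim=> [|m IH] j hj /=; first by case: (j == 0%N).
rewrite hP // IH //; congr (_ + _).
by case: j hj => [|j] hj //=; rewrite IH //; apply: ltnW.
Qed.

Lemma teval_addfold (w : nat -> R) (X : nat -> term) A l :
  teval (S := SR) w (foldr (fun b acc => TAdd (X b) acc) A l) =
  \sum_(b <- l) teval (S := SR) w (X b) + teval (S := SR) w A.
Proof. by elim: l => [|b l IH] /=; rewrite ?big_nil ?add0r // big_cons IH addrA. Qed.

Lemma teval_addfold2 (w : nat -> R) (Y : nat -> nat -> term) L2 T0 l :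
  teval (S := SR) w (foldr (fun a acc => foldr (fun b acc' => TAdd (Y a b) acc') acc L2) T0 l)
  = \sum_(a <- l) \sum_(b <- L2) teval (S := SR) w (Y a b) + teval (S := SR) w T0.
Proof.
elim: l => [|a l IH]; first by rewrite big_nil add0r.
by rewrite big_cons -addrA -IH -teval_addfold.
Qed.

Lemma mulT_eval (w : nat -> R) : (forall i, (i < nn)%N -> w (Pv i) = qc i) ->
  forall s u j, (j < nn)%N ->
  teval (S := SR) w (mulT nn s u j) = mulc (fun a => w (V nn s a)) (fun b => w (V nn u b)) j.
Proof.
move=> hP s u j hj; rewrite /mulT /mulc teval_addfold2.
have -> : teval (S := SR) w TZero = 0 by [].
rewrite addr0 sum_iota; apply: eq_bigr => a _; rewrite sum_iota.
by apply: eq_bigr => b _ /=; rewrite Ct_eval.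
Qed.

Lemma blockL1 r : blockL nn (npair 1 r) = eqs_blk nn (npair 1 r) (fun _ => TZero).
Proof. by rewrite /blockL ufstE. Qed.
Lemma blockL2 r : blockL nn (npair 2 r) = eqs_blk nn (npair 2 r) (fun j => Ct nn 0 j).
Proof. by rewrite /blockL ufstE. Qed.
Lemma blockL30 : blockL nn (npair 3 0) = eqs_blk nn (npair 3 0) (fun j => Ct nn 1 j).
Proof. by rewrite /blockL ufstE usndE. Qed.
Lemma blockL3S i : blockL nn (npair 3 i.+1) =
  eqs_blk nn (npair 3 i.+1) (fun j => if j == 0%N then TCst i else TZero).
Proof. by rewrite /blockL ufstE usndE. Qed.
Lemma blockL4 s u : blockL nn (npair 4 (npair s u)) =
  eqs_blk nn (npair 4 (npair s u)) (fun j => TAdd (TVar (V nn s j)) (TVar (V nn u j))).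
Proof. by rewrite /blockL ufstE usndE ufstE usndE. Qed.
Lemma blockL5 s u : blockL nn (npair 5 (npair s u)) =
  eqs_blk nn (npair 5 (npair s u)) (fun j => mulT nn s u j).
Proof. by rewrite /blockL ufstE usndE ufstE usndE. Qed.

Lemma atomL0 s t : atomL nn (npair 0 (npair s t)) =
  [seq BEq (TVar (V nn s j)) (TVar (V nn t j)) | j <- iota 0 nn].
Proof. by rewrite /atomL ufstE usndE ufstE usndE. Qed.
Lemma atomL10 L : atomL nn (npair 1 (npair 0 L)) =
  if L == 0%N then [:: BEq TOne TZero]
  else if ntail L == 0%N then zeros nn (nhead L) else [:: BEq TOne TZero].
Proof. by rewrite /atomL ufstE usndE ufstE usndE. Qed.
Lemma atomL1S i L : atomL nn (npair 1 (npair i.+1 L)) =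
  BRel i (map (fun t => TVar (V nn t 0)) (decl L)) :: flatten (map (zeros nn) (decl L)).
Proof. by rewrite /atomL ufstE usndE ufstE usndE. Qed.

Lemma In_eqs e f b : List.In b (eqs_blk nn e f) <->
  exists j, (j < nn)%N /\ b = BEq (TVar (V nn e j)) (f j).
Proof.
rewrite /eqs_blk In_map; split => [[j [hj ->]]|[j [hj ->]]]; exists j; split => //;
  move: hj; rewrite In_iota; lia.
Qed.

Lemma In_zeros e b : List.In b (zeros nn e) <->
  exists j, (0 < j < nn)%N /\ b = BEq (TVar (V nn e j)) TZero.
Proof.
rewrite /zeros In_map; split => [[j [hj ->]]|[j [hj ->]]]; exists j; split => //;
  move: hj; rewrite In_iota; lia.
Qed.

Lemma enc_basic_lt phi b : List.In b phi -> (enc_basic b < enc_conj phi)%N.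
Proof. by move=> h; rewrite enc_conjE; apply: encl_lt; apply/In_map; exists b. Qed.

Lemma ncs_neq0 x L : (ncs x L == 0%N) = false. Proof. by []. Qed.
Lemma ntail_ncs x L : ntail (ncs x L) = L. Proof. by rewrite /ntail /ncs /= usndE. Qed.
Lemma nhead_ncs x L : nhead (ncs x L) = x. Proof. by rewrite /nhead /ncs /= ufstE. Qed.

Section Sound.
Variables (phiD : nat -> conj_formula) (phi : conj_formula) (w : nat -> R).
Hypothesis hD : forall i, (i < nn)%N -> forall z : R,
  (exists v : nat -> R, (forall k : nat, True) /\ v 0%N = z /\ holds (S := SR) v (phiD i)) <-> z = p`_i.
Hypothesis hw : holds (S := SR) w (psi nn phiD phi).
Let c := enc_conj phi.

Lemma in_blocksS c' e b : (e < c')%N -> List.In b (blockL nn e) -> List.In b (blocksS nn phiD c').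
Proof.
elim: c' => [|c' IH] // h hb /=; apply/In_cat.
case: (ltngtP e c') => [h1|h1|<-]; [right; exact: IH | lia | by left].
Qed.

Lemma in_defsS c' i b : (i < nn)%N -> List.In b (defsI phiD i) -> List.In b (blocksS nn phiD c').
Proof.
move=> hi hb; elim: c' => [|c' IH]; last by apply/In_cat; right.
rewrite /defsL; apply/In_flatten; exists (defsI phiD i); split => //.
by apply/In_map; exists i; split => //; apply/In_iota.
Qed.

Lemma holds_blocks b : List.In b (blocksS nn phiD c) -> bholds (S := SR) w b.
Proof. by move=> h; apply: hw; rewrite /psi; apply/In_cat; right. Qed.

Lemma holds_atoms b b' : List.In b phi -> List.In b' (atomL nn (enc_basic b)) -> bholds (S := SR) w b'.
Proof.
move=> h1 h2; apply: hw; rewrite /psi; apply/In_cat; left; apply/In_flatten.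
by exists (atomL nn (enc_basic b)); split => //; apply/In_map; exists b.
Qed.

Lemma sound_P i : (i < nn)%N -> w (Pv i) = qc i.
Proof.
move=> hi.
have h1 : bholds (S := SR) w (BEq (TAdd (TVar (Pv i)) (TVar (ren i 0))) TZero).
  by apply: holds_blocks; apply: (in_defsS _ hi); left.
have h2 : holds (S := SR) (fun m => w (ren i m)) (phiD i).
  move=> b hb; apply/bholds_ren; apply: holds_blocks; apply: (in_defsS _ hi).
  by right; apply/In_map; exists b.
have e := (hD hi (w (ren i 0))).1 (ex_intro _ (fun m => w (ren i m)) (conj (fun _ => I) (conj erefl h2))).
rewrite /qc -e; apply/eqP; rewrite -addr_eq0; apply/eqP; exact: h1.
Qed.

Definition valR e := rsum (fun j => w (V nn e j)).
Definition vS k := valR (npair 0 k).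

Lemma valR_eqs e f : (e < c)%N -> blockL nn e = eqs_blk nn e f ->
  valR e = rsum (fun j => teval (S := SR) w (f j)).
Proof.
move=> he hb; apply: rsum_eq => j hj; apply: (holds_blocks (b := BEq (TVar (V nn e j)) (f j))).
by apply: (in_blocksS he); rewrite hb; apply/In_eqs; exists j.
Qed.

Lemma val_term t : (enc_term t < c)%N -> valR (enc_term t) = teval (S := SA) vS t.
Proof.
elim: t => [k| | |i|s IHs u IHu|s IHs u IHu] hc //.
- rewrite -[enc_term _]/(npair 1 0) in hc *.
  by rewrite (valR_eqs hc (blockL1 _)) rsum0.
- rewrite -[enc_term _]/(npair 2 0) in hc *.
  rewrite (valR_eqs hc (blockL2 _)) (rsum_eq (d := Cv 0)) -?alpha_pow //.
  by move=> j hj; rewrite Ct_eval //; apply: sound_P.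
- rewrite -[enc_term _]/(npair 3 i) in hc *; case: i hc => [|i] hc.
    rewrite (valR_eqs hc blockL30) (rsum_eq (d := Cv 1)) -?alpha_pow ?expr1 //.
    by move=> j hj; rewrite Ct_eval //; apply: sound_P.
  rewrite (valR_eqs hc (blockL3S _)) -[RHS]/(io (cst i)) -rsum_const.
  by apply: rsum_eq => -[|j] hj.
- rewrite -[enc_term _]/(npair 4 (npair (enc_term s) (enc_term u))) in hc *.
  case/andP: (enc_sub_lt (enc_term s) (enc_term u) (isT : 0 < 4)%N) => h1 h2.
  have hs : (enc_term s < c)%N by lia.
  have hu : (enc_term u < c)%N by lia.
  rewrite (valR_eqs hc (blockL4 _ _)) /= -(IHs hs) -(IHu hu).
  by rewrite /valR rsumD.
- rewrite -[enc_term _]/(npair 5 (npair (enc_term s) (enc_term u))) in hc *.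
  case/andP: (enc_sub_lt (enc_term s) (enc_term u) (isT : 0 < 5)%N) => h1 h2.
  have hs : (enc_term s < c)%N by lia.
  have hu : (enc_term u < c)%N by lia.
  rewrite (valR_eqs hc (blockL5 _ _)).
  rewrite -[teval _ (TMul s u)]/(teval (S := SA) vS s * teval (S := SA) vS u) -(IHs hs) -(IHu hu).
  rewrite /valR rsum_mul; apply: rsum_eq => j hj.
  by rewrite mulT_eval //; apply: sound_P.
Qed.

Lemma valR_zeros e : (e < c)%N -> (forall b, List.In b (zeros nn e) -> bholds (S := SR) w b) ->
  valR e = io (w (V nn e 0)).
Proof.
move=> he hz; rewrite /valR -rsum_const; apply: rsum_eq => -[|j] hj //=.
by apply: (hz (BEq (TVar (V nn e j.+1)) TZero)); apply/In_zeros; exists j.+1.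
Qed.

Lemma false_atom : ~ bholds (S := SR) w (BEq TOne TZero).
Proof. by move=> /= /eqP; rewrite oner_eq0. Qed.

Lemma atom_sound b : List.In b phi -> bholds (S := SA) vS b.
Proof.
move=> hb; have hc := enc_basic_lt hb; have ha := holds_atoms hb.
case: b hb hc ha => [s t|i ts] hb hc ha.
  rewrite -[enc_basic _]/(npair 0 (npair (enc_term s) (enc_term t))) in hc ha.
  case/andP: (npair_ge (enc_term s) (enc_term t)) => h1 h2.
  case/andP: (npair_ge 0 (npair (enc_term s) (enc_term t))) => h3 h4.
  rewrite /= -!val_term; try lia.
  apply: rsum_eq => j hj; apply: (ha (BEq (TVar (V nn (enc_term s) j)) (TVar (V nn (enc_term t) j)))).
  by rewrite atomL0; apply/In_map; exists j; split => //; apply/In_iota.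
rewrite -[enc_basic _]/(npair 1 (npair i (enc_terms ts))) enc_termsE in hc ha.
have hts : forall t, List.In t ts -> (enc_term t < c)%N.
  move=> t ht; have := encl_lt (x := enc_term t) (l := map enc_term ts).
  case/andP: (npair_ge i (encl (map enc_term ts))) => h1 h2.
  case/andP: (npair_ge 1 (npair i (encl (map enc_term ts)))) => h3 h4.
  have : List.In (enc_term t) (map enc_term ts) by apply/In_map; exists t.
  move=> h /(_ h); lia.
case: i hb hc ha => [|i] hb hc ha.
  rewrite atomL10 in ha.
  case: ts hb hc ha hts => [|t [|t2 ts]] hb hc ha hts.
  - by exfalso; apply: false_atom; apply: ha; left.
  - rewrite -[encl _]/(ncs (enc_term t) (encl [::])) ncs_neq0 ntail_ncs nhead_ncs in ha.
    exists (w (V nn (enc_term t) 0)) => /=.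
    rewrite -val_term; last by apply: hts; left.
    by rewrite (valR_zeros (hts t (or_introl erefl))).
  - rewrite -[encl _]/(ncs (enc_term t) (ncs (enc_term t2) (encl (map enc_term ts)))) in ha.
    rewrite ncs_neq0 ntail_ncs ncs_neq0 in ha.
    by exfalso; apply: false_atom; apply: ha; left.
rewrite atomL1S decl_encl in ha.
exists (map (fun t => w (V nn (enc_term t) 0)) ts); split.
  have := ha _ (or_introl erefl); rewrite /= -!map_comp.
  by congr (rel i _); apply: eq_map.
rewrite /= -map_comp; apply: eq_map_In => t ht /=.
rewrite -val_term; last exact: hts.
apply: valR_zeros; first exact: hts.
move=> b' hb'; apply: ha; right; apply/In_flatten; exists (zeros nn (enc_term t)); split => //.
by apply/In_map; exists (enc_term t); split => //; apply/In_map; exists t.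
Qed.
End Sound.

Lemma soundness phiD phi :
  (forall i, (i < nn)%N -> forall z : R,
    (exists v : nat -> R, (forall k : nat, True) /\ v 0%N = z /\ holds (S := SR) v (phiD i)) <-> z = p`_i) ->
  solvable SR (psi nn phiD phi) -> solvable SA phi.
Proof.
move=> hD [w [_ hw]]; exists (vS w); split.
  by move=> k; apply/inR_rsum; exists (fun j => w (V nn (npair 0 k) j)).
by move=> b hb; exact: (atom_sound hD hw hb).
Qed.

Lemma hodd y : odd (2 * y).+1 = true /\ ((2 * y).+1)./2 = y.
Proof.
split; first by rewrite /= mul2n odd_double.
by rewrite mul2n -[(_.*2).+1]/(true + _.*2)%N half_bit_double.
Qed.

Section Complete.
Variables (phiD : nat -> conj_formula) (vD : nat -> nat -> R) (coordF : F -> nat -> R).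
Variables (phi : conj_formula) (v : nat -> F).
Hypothesis hvD : forall i, vD i 0%N = p`_i /\ holds (S := SR) (vD i) (phiD i).
Hypothesis hcoord : forall x cc, x = rsum cc -> x = rsum (coordF x).
Hypothesis hv : forall k, inRalpha io alpha (v k).
Hypothesis hphi : holds (S := SA) v phi.

Definition valC e := teval (S := SA) v (dec e).
Definition wC x := if odd x then
    (if usnd x./2 == 0%N then qc (ufst x./2) else vD (ufst x./2) (usnd x./2).-1)
  else coordF (valC (x./2 %/ nn)) (x./2 %% nn).

Lemma wV e j : (j < nn)%N -> wC (V nn e j) = coordF (valC e) j.
Proof.
move=> hj; rewrite /wC /V mul2n odd_double doubleK divnMDl // divn_small // addn0.
by rewrite modnMDl modn_small.
Qed.

Lemma wP i : wC (Pv i) = qc i.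
Proof. by rewrite /wC /Pv; case: (hodd (npair i 0)) => -> ->; rewrite usndE ufstE. Qed.

Lemma wR i m : wC (ren i m) = vD i m.
Proof. by rewrite /wC /ren; case: (hodd (npair i m.+1)) => -> ->; rewrite usndE ufstE. Qed.

Lemma teval_rep t : exists cc, teval (S := SA) v t = rsum cc.
Proof.
elim: t => [k| | |[|i]|s [c1 h1] u [c2 h2]|s [c1 h1] u [c2 h2]].
- by apply/inR_rsum; apply: hv.
- by exists (fun _ => 0); rewrite rsum0.
- by exists (Cv 0); rewrite -alpha_pow expr0.
- by exists (Cv 1); rewrite -alpha_pow expr1.
- by exists (fun j => if j == 0%N then cst i else 0); rewrite rsum_const.
- by exists (fun j => c1 j + c2 j); rewrite -rsumD /= h1 h2.
- by exists (mulc c1 c2); rewrite -rsum_mul /= h1 h2.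
Qed.

Lemma coordE x cc : x = rsum cc -> forall j, (j < nn)%N -> coordF x j = cc j.
Proof. by move=> h; apply: rsum_uniq; rewrite -(hcoord h) -h. Qed.

Lemma valC_rsum e : valC e = rsum (coordF (valC e)).
Proof. by have [cc h] := teval_rep (dec e); exact: hcoord h. Qed.

Lemma hPw i : (i < nn)%N -> wC (Pv i) = qc i.
Proof. by rewrite wP. Qed.

Lemma beq_holds (w : nat -> R) s t : teval (S := SR) w s = teval (S := SR) w t -> bholds (S := SR) w (BEq s t).
Proof. by []. Qed.

Lemma block_ok e b : List.In b (blockL nn e) -> bholds (S := SR) wC b.
Proof.
have hd := decE e.
case E: (ufst e) hd => [|[|[|[|[|[|t]]]]]] hd; rewrite /blockL E //.
- move=> /In_eqs [j [hj ->]]; apply: beq_holds; rewrite [teval _ (TVar _)]/=.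
  rewrite wV // (coordE (cc := fun _ => 0)) //.
  by rewrite /valC hd rsum0.
- move=> /In_eqs [j [hj ->]]; apply: beq_holds; rewrite [teval _ (TVar _)]/=.
  rewrite wV // (coordE (cc := Cv 0)) //.
    by rewrite Ct_eval // => i hi; rewrite wP.
  by rewrite /valC hd -alpha_pow expr0.
- move=> hb0; have : List.In b (if usnd e == 0%N then eqs_blk nn e (fun j => Ct nn 1 j)
     else eqs_blk nn e (fun j => if j == 0%N then TCst (usnd e).-1 else TZero)) by exact: hb0.
  clear hb0; case: eqP => hr.
    move=> /In_eqs [j [hj ->]]; apply: beq_holds; rewrite [teval _ (TVar _)]/=.
    rewrite wV // (coordE (cc := Cv 1)) //.
      by rewrite Ct_eval // => i hi; rewrite wP.
    by rewrite /valC hd hr -alpha_pow expr1.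
  case Er: (usnd e) hr hd => [|r] // _ hd.
  move=> /In_eqs [j [hj ->]]; apply: beq_holds; rewrite [teval _ (TVar _)]/=.
  rewrite wV // (coordE (cc := fun j => if j == 0%N then cst r else 0)) //.
    by case: j hj.
  by rewrite /valC hd rsum_const.
- move=> /In_eqs [j [hj ->]]; apply: beq_holds; rewrite /= !wV //.
  rewrite (coordE (cc := fun j => coordF (valC (ufst (usnd e))) j + coordF (valC (usnd (usnd e))) j)) //.
  by rewrite -rsumD -!valC_rsum /valC hd.
- move=> /In_eqs [j [hj ->]]; apply: beq_holds; rewrite [teval _ (TVar _)]/=.
  rewrite wV // mulT_eval //; last by move=> i _; rewrite wP.
  rewrite (coordE (cc := mulc (coordF (valC (ufst (usnd e)))) (coordF (valC (usnd (usnd e)))))) //.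
    by rewrite /mulc; apply: eq_bigr => a _; apply: eq_bigr => b0 _; rewrite !wV.
  by rewrite -rsum_mul -!valC_rsum /valC hd.
Qed.

Lemma defs_ok i b : List.In b (defsI phiD i) -> bholds (S := SR) wC b.
Proof.
case=> [<-|/In_map [b' [hb' ->]]].
  by rewrite /= wP wR (hvD i).1 /qc addNr.
apply/bholds_ren; apply/(@bholds_ext SR (fun m => wC (ren i m)) (vD i) b' (fun m => wR i m)).
exact: (hvD i).2 b' hb'.
Qed.

Lemma coord_io r j : (j < nn)%N -> coordF (io r) j = if j == 0%N then r else 0.
Proof. by move=> hj; rewrite (coordE (esym (rsum_const r))). Qed.

Lemma atom_ok b b' : List.In b phi -> List.In b' (atomL nn (enc_basic b)) -> bholds (S := SR) wC b'.
Proof.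
move=> hb; have hv0 := hphi hb.
case: b hb hv0 => [s t|i ts] hb hv0.
  rewrite -[enc_basic _]/(npair 0 (npair (enc_term s) (enc_term t))) atomL0.
  move=> /In_map [j [hj ->]]; move/In_iota: hj => hj.
  by rewrite /= !wV ?add0n // /valC !dec_enc hv0.
rewrite -[enc_basic _]/(npair 1 (npair i (enc_terms ts))) enc_termsE.
case: i hb hv0 => [|i] hb hv0.
  case: hv0 => r /= hr.
  case: ts hb hr => [|t [|t2 ts]] //= hb [hr].
  rewrite atomL10 ncs_neq0 ntail_ncs eqxx nhead_ncs.
  move=> /In_zeros [j [/andP [hj1 hj2] ->]].
  rewrite /= wV // /valC dec_enc hr coord_io //.
  by case: j hj1 hj2.
case: hv0 => s0 [hrel hs0].
rewrite atomL1S decl_encl => -[<-|].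
  rewrite /= -!map_comp; suff -> : map (teval (S := SR) wC \o (fun t : nat => TVar (V nn t 0)) \o enc_term) ts = s0 by [].
  transitivity (map (fun x => coordF x 0) (map (teval (S := SA) v) ts)).
    by rewrite -map_comp; apply: eq_map => t /=; rewrite wV // /valC dec_enc.
  rewrite hs0 -map_comp -[RHS]map_id; apply: eq_map => r /=.
  by rewrite coord_io.
move=> /In_flatten [zs [/In_map [et [/In_map [t [ht ->]] ->]] hz]].
move/In_zeros: hz => [j [/andP [hj1 hj2] ->]].
have : List.In (teval (S := SA) v t) (map io s0).
  by rewrite -hs0; apply/In_map; exists t.
move=> /In_map [r [_ hr]].
rewrite /= wV // /valC dec_enc hr coord_io //.
by case: j hj1 hj2.
Qed.

Lemma in_blocksS_inv c' b : List.In b (blocksS nn phiD c') ->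
  (exists i, List.In b (defsI phiD i)) \/ exists e, List.In b (blockL nn e).
Proof.
elim: c' => [|c' IH].
  move=> /In_flatten [d [/In_map [i [_ ->]] hd]]; left; by exists i.
move=> /In_cat [h|h]; [right; by exists c' | exact: IH].
Qed.

Lemma holds_wC : holds (S := SR) wC (psi nn phiD phi).
Proof.
move=> b /In_cat [|].
  move=> /In_flatten [l [/In_map [b0 [hb0 ->]] hb]]; exact: atom_ok hb0 hb.
move=> /in_blocksS_inv [[i h]|[e h]]; [exact: defs_ok h | exact: block_ok h].
Qed.
End Complete.
End Alg.

End SemM.
Export SemM.

End H19.
Import H19.
Unset Implicit Arguments.

Theorem mainTheorem19
  (R : idomainType) (cst : nat -> R) (rel : nat -> seq R -> Prop)
  (F : fieldType) (iota : {rmorphism R -> F}) (iota_inj : injective iota)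
  (alpha : F) (p : {poly R})
  (p_monic : p \is monic)
  (p_root : root (map_poly iota p) alpha)
  (p_min : forall q : {poly R}, q != 0%R -> root (map_poly iota q) alpha ->
             (size p <= size q)%N)
  (p_coef : forall i : nat, @diophantine_singleton (StrucR cst rel) (p`_i)%R)
  (H10R : H10_positive (StrucR cst rel)) :
  H10_positive (StrucRalpha iota alpha cst rel).
Proof.
have sp2 : (1 < size p)%N.
  case: ltnP => // hs; exfalso.
  have p1 : p = 1%R.
    have hp0 : p != 0%R by apply: monic_neq0.
    have hs1 : size p = 1%N by move: hs; rewrite -size_poly_eq0 in hp0; case: (size p) hp0 => [|[|]].
    move/monicP: p_monic; rewrite /lead_coef hs1 /= => h0.
    by rewrite [p]size1_polyC ?hs1 // h0.
  by move: p_root; rewrite p1 rmorph1 /root hornerC oner_eq0.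
set n' := (size p).-2.
have sp : size p = n'.+2 by rewrite /n'; case: (size p) sp2 => [|[|m]].
pose phiD := fun i => proj1_sig (constructive_indefinite_description _ (p_coef i)).
have hphiD : forall i z, (exists v : nat -> R, (forall k : nat, True) /\ v 0%N = z /\
    holds (S := StrucR cst rel) v (phiD i)) <-> z = (p`_i)%R.
  by move=> i z; exact: (proj2_sig (constructive_indefinite_description _ (p_coef i)) z I).
have hex : forall i, exists v : nat -> R, (forall k : nat, True) /\ v 0%N = (p`_i)%R /\
    holds (S := StrucR cst rel) v (phiD i) by move=> i; exact: (hphiD i _).2 erefl.
pose vD := fun i => proj1_sig (constructive_indefinite_description _ (hex i)).
have hvD : forall i, vD i 0%N = (p`_i)%R /\ holds (S := StrucR cst rel) (vD i) (phiD i).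
  by move=> i; case: (proj2_sig (constructive_indefinite_description _ (hex i))) => _ [h1 h2].
pose coordF := fun x : F => match excluded_middle_informative (exists cc, x = rsum iota alpha n' cc) with
  | left h => proj1_sig (constructive_indefinite_description _ h) | right _ => fun _ => 0%R end.
have hcoord : forall x cc, x = rsum iota alpha n' cc -> x = rsum iota alpha n' (coordF x).
  move=> x cc hx; rewrite /coordF; case: excluded_middle_informative => [h|h]; last first.
    by exfalso; apply: h; exists cc.
  exact: (proj2_sig (constructive_indefinite_description _ h)).
case: H10R => f hf.
have [r hr] := Rep_TN n'.+1 (enc_conj (defsL n'.+1 phiD)).
exists (RComp f [:: r]) => phi.
have hev : forall y, evalr f [:: enc_conj (psi n'.+1 phiD phi)] y ->
    evalr (RComp f [:: r]) [:: enc_conj phi] y.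
  move=> y hy; apply: (@ev_C _ _ _ [:: enc_conj (psi n'.+1 phiD phi)]) => //.
  constructor; last by constructor.
  by rewrite -TN_psi; apply: (hr [:: enc_conj phi]).
have [hf1 hf2] := hf (psi n'.+1 phiD phi).
split => h; apply: hev.
  apply: hf1; case: h => v [hv hphi].
  exists (wC iota alpha p n' cst rel vD coordF v); split => //.
  exact: (holds_wC iota_inj sp p_monic p_root p_min hvD hcoord hv hphi).
apply: hf2 => hs; apply: h.
apply: (soundness iota_inj sp p_monic p_root _ hs).
by move=> i _ z; exact: hphiD.
Qed.
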